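(* Let $n\ge 2$ and let $F(x)=\frac{1}{1+\exp(-x)}$ be the logistic cumulative distribution function. Let $D=(D_{i,j,k})$, $i,j\in\{1,\dots,n\}$, $k\in\{1,2\}$, be nonnegative real data with $D_{i,j,1}=D_{j,i,2}$ for all $i,j$. Let $I$ be a set of ordered pairs $(i,j)$ with $i\neq j$ such that $(i,j)\in I$ if and only if $(j,i)\in I$, and such that $D_{i,j,1}>0$ and $D_{i,j,2}>0$ for all $(i,j)\in I$. Suppose the undirected graph $G_I$ on vertex set $\{1,\dots,n\}$ with an edge $\{i,j\}$ whenever $(i,j)\in I$ is connected. For $(i,j)\in I$ put $h_{i,j}=D_{i,j,2}/D_{i,j,1}$. Then the following are equivalent: (a) for every cycle $(i_1,i_2,\dots,i_k,i_1)$ in $G_I$ (i.e. $(i_l,i_{l+1})\in I$ for $l=1,\dots,k-1$ and $(i_k,i_1)\in I$) one has $h_{i_1,i_2}\cdot h_{i_2,i_3}\cdots h_{i_{k-1},i_k}\cdot h_{i_k,i_1}=1$; (b) there exists $\underline{m}^{(0)}=(0,m_2^{(0)},\dots,m_n^{(0)})\in\mathbb{R}^n$ such that $$\frac{D_{i,j,2}}{D_{i,j,1}}=\frac{F\big(m_i^{(0)}-m_j^{(0)}\big)}{F\big(m_j^{(0)}-m_i^{(0)}\big)}\quad\text{for all }(i,j)\in I.$$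
   Context: In the Bradley–Terry paired comparison model, $D_{i,j,1}$ is the number (or weight) of comparisons with outcome ''$i$ is worse than $j$'' and $D_{i,j,2}$ the number with outcome ''$i$ is better than $j$'', so $D_{i,j,1}=D_{j,i,2}$. The data matrix $D$ is called consistent in $I$ when condition (a) holds. *)

(* Defs.v *)
From HB Require Import structures.
From mathcomp Require Import all_boot all_order all_algebra.
From mathcomp Require Import reals.
From mathcomp Require Import sequences.
Set Implicit Arguments. Unset Strict Implicit. Unset Printing Implicit Defensive.
Import Order.TTheory GRing.Theory Num.Theory.
Local Open Scope ring_scope.

Definition logisticF (R : realType) (x : R) : R := 1 / (1 + expR (- x)).

(* Data D : 'I_n -> 'I_n -> 'I_2 -> R.  The paper's index k = 1 ("i is worse
   than j") is the ordinal 0 : 'I_2, and k = 2 ("i is better than j") is the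
   ordinal 1 : 'I_2. *)
Definition k1 : 'I_2 := ord0.
Definition k2 : 'I_2 := ord_max.

Definition hratio (R : realType) (n : nat) (D : 'I_n -> 'I_n -> 'I_2 -> R)
  (i j : 'I_n) : R := D i j k2 / D i j k1.

Definition cycle_prod (R : realType) (n : nat) (h : 'I_n -> 'I_n -> R)
  (s : seq 'I_n) : R :=
  match s with
  | [::] => 1
  | x :: p => \prod_(e <- zip (x :: p) (rcons p x)) h e.1 e.2
  end.

(* Main.v *)
Require Import Defs.
From HB Require Import structures.
From mathcomp Require Import all_boot all_order all_algebra.
From mathcomp Require Import reals.
From mathcomp Require Import sequences exp.
From mathcomp Require Import ring lra.
Import Order.TTheory GRing.Theory Num.Theory.
Local Open Scope ring_scope.

Section Aux.
Variable R : realType.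
Variable n : nat.

Definition W (h : 'I_n -> 'I_n -> R) (x : 'I_n) (p : seq 'I_n) : R :=
  \prod_(e <- zip (x :: p) p) h e.1 e.2.

Lemma W_nil h x : W h x [::] = 1.
Proof. by rewrite /W /= big_nil. Qed.

Lemma W_cons h x y p : W h x (y :: p) = h x y * W h y p.
Proof. by rewrite /W /= big_cons. Qed.

Lemma W_cat h x p q : W h x (p ++ q) = W h x p * W h (last x p) q.
Proof.
elim: p x => [|y p IH] x /=; first by rewrite W_nil mul1r.
by rewrite !W_cons IH mulrA.
Qed.

Lemma logistic_ratio (x : R) : logisticF x / logisticF (- x) = expR x.
Proof.
rewrite /logisticF opprK.
have h1 : 0 < 1 + expR (- x) by rewrite addr_gt0 ?expR_gt0.
have h2 : 0 < 1 + expR x by rewrite addr_gt0 ?expR_gt0.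
rewrite expRN.
have h3 : 0 < expR x by apply: expR_gt0.
field.
rewrite !lt0r_neq0 //.
Qed.
End Aux.
Arguments W {R n}.
Arguments logistic_ratio {R}.

Theorem theorem2 (R : realType) (n : nat) (hn : (2 <= n)%N)
  (D : 'I_n -> 'I_n -> 'I_2 -> R) (I : rel 'I_n)
  (D_nonneg : forall i j k, 0 <= D i j k)
  (D_sym : forall i j, D i j k1 = D j i k2)
  (I_irr : forall i j, I i j -> i != j)
  (I_sym : forall i j, I i j = I j i)
  (I_pos : forall i j, I i j -> 0 < D i j k1 /\ 0 < D i j k2)
  (G_conn : forall i j, connect I i j) :
  (forall s : seq 'I_n, s != [::] -> cycle I s ->
      cycle_prod (hratio D) s = 1)
  <->
  (exists m : 'I_n -> R, (forall i : 'I_n, nat_of_ord i = 0%N -> m i = 0) /\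
     forall i j, I i j ->
       D i j k2 / D i j k1 = logisticF (m i - m j) / logisticF (m j - m i)).
Proof.
have cpW : forall x q, cycle_prod (hratio D) (x :: q) = W (hratio D) x (rcons q x).
  move=> x q; rewrite /cycle_prod /W.
  have -> : zip (x :: rcons q x) (rcons q x) = zip (x :: q) (rcons q x).
    have Z : forall (y : 'I_n) q x, zip (x :: rcons q y) (rcons q y) = zip (x :: q) (rcons q y).
      by move=> y; elim=> [|z q' IH] x0 //=; rewrite IH.
    exact: Z.
  by [].
split.
- move=> Ha.
  have A : forall x p, path I x p -> last x p = x -> W (hratio D) x p = 1.
    move=> x p; case/lastP: p => [|q y]; first by rewrite W_nil.
    rewrite last_rcons => Hp Hy; subst y.
    by rewrite -cpW; apply: Ha.
  have Pos : forall x p, path I x p -> 0 < W (hratio D) x p.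
    move=> x p; elim: p x => [|y p IH] x /=; first by rewrite W_nil.
    case/andP=> Ixy Hp; rewrite W_cons mulr_gt0 ?IH //.
    by case: (I_pos _ _ Ixy) => a b; rewrite /hratio divr_gt0.
  have n0 : (0 < n)%N by apply: leq_trans hn.
  pose i0 : 'I_n := Ordinal n0.
  have ex : forall x y, exists p : seq 'I_n, path I x p && (last x p == y).
    move=> x y; case/connectP: (G_conn x y) => p Hp ->.
    by exists p; rewrite Hp eqxx.
  pose q (i : 'I_n) := xchoose (ex i i0).
  pose r (i : 'I_n) := xchoose (ex i0 i).
  have qP : forall i, path I i (q i) && (last i (q i) == i0) := fun i => xchooseP (ex i i0).
  have rP : forall i, path I i0 (r i) && (last i0 (r i) == i) := fun i => xchooseP (ex i0 i).
  pose G i := W (hratio D) i (q i).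
  have Gpos : forall i, 0 < G i by move=> i; case/andP: (qP i) => /Pos.
  exists (fun i => ln (G i)); split.
    move=> i Hi; have -> : i = i0 by apply: val_inj.
    case/andP: (qP i0) => Hp /eqP Hl; rewrite /G (A _ _ Hp Hl).
    by rewrite -[1](expR0 R) expRK.
  move=> i j Iij.
  rewrite -[ln (G j) - ln (G i)]opprB logistic_ratio expRB !lnK ?posrE ?Gpos //.
  case/andP: (qP i) => Hqi /eqP Hlqi; case/andP: (qP j) => Hqj /eqP Hlqj.
  case/andP: (rP i) => Hri /eqP Hlri.
  have E1 : W (hratio D) i (q i ++ r i) = 1.
    apply: A; first by rewrite cat_path Hqi Hlqi Hri.
    by rewrite last_cat Hlqi.
  have E2 : W (hratio D) i (j :: q j ++ r i) = 1.
    apply: A; first by rewrite /= Iij cat_path Hqj Hlqj Hri.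
    by rewrite /= last_cat Hlqj.
  rewrite W_cat Hlqi in E1.
  rewrite W_cons W_cat Hlqj in E2.
  have Rne : W (hratio D) i0 (r i) != 0.
    by apply/eqP => H; move: E1; rewrite H mulr0 => /eqP; rewrite eq_sym oner_eq0.
  have : hratio D i j * G j = G i.
    apply: (mulIf Rne); by rewrite -mulrA E2 E1.
  move=> <-; rewrite /hratio; field.
  case: (I_pos _ _ Iij) => Pa Pb.
  by rewrite !lt0r_neq0 ?Gpos.
- case=> m [_ Hm] s sne.
  case: s sne => [//|x p] _ Hc.
  rewrite cpW.
  have H : forall y t, path I y t -> W (hratio D) y t = expR (m y - m (last y t)).
    move=> y t; elim: t y => [|z t IH] y /=; first by rewrite W_nil subrr expR0.
    case/andP=> Iyz Hp; rewrite W_cons IH // /hratio Hm //.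
    have L := logistic_ratio (m y - m z); rewrite opprB in L.
    by rewrite L -expRD; congr expR; ring.
  by rewrite H // last_rcons subrr expR0.
Qed.
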